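(* Let $G$ be a cycle graph with $L\ge2$ edges and root $O$, and let all edges have activation probability $p\in(0,1]$. Then Eulerian strategies of the searcher are best responses to the uniform distribution of the hider on the edges.
   Context: Setting: the stochastic search game. Every edge has length $1$ and is active at each stage independently with probability $p$. The hider chooses an edge and stays there. The searcher starts at $O$; at each stage, knowing which edges are currently active, she waits or traverses an active edge incident to her position. The hider's payoff is the expected first time the searcher traverses his edge. An Eulerian strategy is a searcher strategy that at each stage either waits or traverses an active, not yet traversed edge incident to her position, in such a way that the sequence of traversed edges forms an Eulerian cycle starting from $O$. On a cycle graph this means going around the cycle in one direction, the direction being chosen at the first move. *)

(* Defs.v *)
From HB Require Import structures.
From mathcomp Require Import all_boot all_order all_algebra.
Set Implicit Arguments. Unset Strict Implicit. Unset Printing Implicit Defensive.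
Import Order.TTheory GRing.Theory Num.Theory.

(* Cycle graph with L edges: vertices 0..L-1 (naturals), root O = vertex 0;
   edge e : 'I_L joins vertex e and vertex (e+1) mod L. *)

Definition act (L : nat) := {ffun 'I_L -> bool}.

Definition active (L : nat) (a : act L) (k : nat) : bool :=
  [exists e : 'I_L, (val e == k) && a e].

(* A (pure, history dependent) searcher strategy: given the history of the
   activation states observed so far, INCLUDING the current one, it chooses
   to wait (None) or to traverse the edge e (Some e).  A choice of an edge
   that is not active or not incident to the current position is treated
   as waiting. *)
Definition strategy (L : nat) := seq (act L) -> option 'I_L.

Definition mv (L : nat) (v : nat) (a : act L) (m : option 'I_L)
  : option ('I_L * nat) :=
  match m with
  | Some e =>
      if a e && (v == val e) then Some (e, (val e).+1 %% L)
      else if a e && (v == (val e).+1 %% L) then Some (e, val e)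
      else None
  | None => None
  end.

Fixpoint simst (L : nat) (s : strategy L) (hist : seq (act L)) (v : nat)
  (tr : seq 'I_L) (fut : seq (act L)) : nat * seq 'I_L :=
  match fut with
  | [::] => (v, tr)
  | a :: fut' =>
      let h := rcons hist a in
      match mv v a (s h) with
      | Some (e, v') => simst s h v' (rcons tr e) fut'
      | None => simst s h v tr fut'
      end
  end.

Definition state (L : nat) (s : strategy L) (w : seq (act L)) : nat * seq 'I_L :=
  simst s [::] 0 [::] w.

(* Eulerian rule on a cycle, for one stage: at position v, having traversed
   tr, facing activation a, the realized move is r.
   - Before the first move: traverse an incident active edge (0 or L-1) if
     one is active (choice free), otherwise wait.
   - After the first move and until all L edges are traversed: keep the
     direction chosen at the first move; traverse the next edge in that
     direction iff it is active, otherwise wait.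
   - After the tour is complete: anything. *)
Definition eul_ok (L : nat) (v : nat) (tr : seq 'I_L) (a : act L)
  (r : option ('I_L * nat)) : bool :=
  match tr with
  | [::] =>
      match r with
      | None => ~~ active a 0 && ~~ active a L.-1
      | Some _ => true
      end
  | e1 :: _ =>
      if size tr < L then
        let nxt := if val e1 == 0 then v else (v + L.-1) %% L in
        match r with
        | None => ~~ active a nxt
        | Some (e, _) => val e == nxt
        end
      else true
  end.

Definition Eulerian (L : nat) (s : strategy L) : Prop :=
  forall (w : seq (act L)) (a : act L),
    eul_ok (state s w).1 (state s w).2 a
      (mv (state s w).1 a (s (rcons w a))).

Local Open Scope ring_scope.

Definition weight (R : realFieldType) (L t : nat) (p : R)
  (w : {ffun 'I_t -> act L}) : R :=
  \prod_(i < t) \prod_(e < L) (if w i e then p else 1 - p).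

Definition hist_of (L t : nat) (w : {ffun 'I_t -> act L}) : seq (act L) :=
  map w (enum 'I_t).

(* P(T_e > t): probability that edge e has not been traversed during the
   first t stages (T_e = stage at which e is first traversed). *)
Definition prob_not_found (R : realFieldType) (L : nat) (p : R)
  (s : strategy L) (e : 'I_L) (t : nat) : R :=
  \sum_(w : {ffun 'I_t -> act L})
     (if e \in (state s (hist_of w)).2 then 0 else weight p w).

(* The payoff is the series sum_{t>=0} of these
   terms, i.e. (1/L) sum_e E[T_e]  (E[T] = sum_{t>=0} P(T > t)). *)
Definition unif_term (R : realFieldType) (L : nat) (p : R)
  (s : strategy L) (t : nat) : R :=
  L%:R^-1 * \sum_(e < L) prob_not_found p s e t.

(* Comparison of sums of series with nonnegative terms, in [0, +oo]:
   sum u <= sum v. *)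
Definition series_le (R : realFieldType) (u v : nat -> R) : Prop :=
  forall N : nat, exists M : nat, \sum_(t < N) u t <= \sum_(t < M) v t.

Definition payoff_le (R : realFieldType) (L : nat) (p : R)
  (s s' : strategy L) : Prop :=
  series_le (unif_term p s) (unif_term p s').

(* Main.v *)
Require Import Defs.
From HB Require Import structures.
From mathcomp Require Import all_boot all_order all_algebra.
From mathcomp Require Import zify ring lra.
Set Implicit Arguments. Unset Strict Implicit. Unset Printing Implicit Defensive.
Import Order.TTheory GRing.Theory Num.Theory.
Local Open Scope ring_scope.

Section Prob.
Variables (R : realFieldType) (L : nat) (p : R).

Definition wa (a : act L) : R := \prod_(e < L) (if a e then p else 1 - p).

Fixpoint LS (t : nat) (G : seq (act L) -> R) : R :=
  if t is t'.+1 then \sum_(a : act L) wa a * LS t' (fun l => G (a :: l)) else G [::].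

Lemma LS_ext t G G' : (forall l, G l = G' l) -> LS t G = LS t G'.
Proof. elim: t G G' => [|t IH] G G' H /=; first exact: H.
apply: eq_bigr => a _; congr (_ * _); exact: IH. Qed.

Lemma sum_ffun_LS t (G : seq (act L) -> R) :
  \sum_(w : {ffun 'I_t -> act L}) weight p w * G (hist_of w) = LS t G.
Proof.
elim: t G => [|t IH] G /=.
  have E (w : {ffun 'I_0 -> act L}) : weight p w * G (hist_of w) = G [::].
    rewrite /weight. rewrite big_ord0 mul1r /hist_of.
    by case: (enum 'I_0) (size_enum_ord 0).
  rewrite (eq_bigr _ (fun w _ => E w)) big_const card_ffun card_ord expn0 /=.
  by rewrite addr0.
pose h (x : act L * {ffun 'I_t -> act L}) : {ffun 'I_t.+1 -> act L} :=
  [ffun i => if unlift ord0 i is Some j then x.2 j else x.1].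
pose hi (f : {ffun 'I_t.+1 -> act L}) := (f ord0, [ffun j => f (lift ord0 j)]).
have h0 x : h x ord0 = x.1 by rewrite ffunE unlift_none.
have hl x i : h x (lift ord0 i) = x.2 i by rewrite ffunE liftK.
have hK : cancel h hi.
  by case=> a g; rewrite /hi h0; congr pair; apply/ffunP => i; rewrite ffunE hl.
have hiK : cancel hi h.
  move=> f; apply/ffunP => i; rewrite ffunE.
  by case: (unliftP ord0 i) => [j ->|->] /=; rewrite ?ffunE.
rewrite (reindex h); last by apply: onW_bij; exists hi.
rewrite -(pair_big xpredT xpredT (fun a g => weight p (h (a,g)) * G (hist_of (h (a,g))))) /=.
apply: eq_bigr => a _.
rewrite -(IH (fun l => G (a :: l))) mulr_sumr; apply: eq_bigr => g _.
rewrite /weight big_ord_recl /hist_of enum_ordSl /= h0 /= mulrA; congr (_ * _ * G _).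
  by apply: eq_bigr => i _; rewrite hl.
by rewrite -map_comp; congr (_ :: _); apply: eq_map => i /=; rewrite hl.
Qed.

Lemma prod_form (G : 'I_L -> bool -> R) :
  \sum_(a : act L) \prod_(e < L) G e (a e) = \prod_(e < L) (G e true + G e false).
Proof. rewrite -(bigA_distr_bigA G) /=; apply: eq_bigr => e _; by rewrite big_bool. Qed.

Lemma sum_wa : \sum_(a : act L) wa a = 1.
Proof.
rewrite /wa (prod_form (fun e b => if b then p else 1 - p)) /=.
by rewrite big1 // => e _; rewrite addrC subrK.
Qed.

Lemma sum_none (K : {set 'I_L}) :
  \sum_(a : act L) wa a * ([forall e in K, ~~ a e])%:R = (1 - p) ^+ #|K|.
Proof.
pose G e (b : bool) := if b then (if e \in K then 0 else p) else 1 - p.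
have E a : wa a * ([forall e in K, ~~ a e])%:R = \prod_(e < L) G e (a e).
  case: (boolP [forall e in K, ~~ a e]) => H.
    rewrite mulr1; apply: eq_bigr => e _; rewrite /G.
    case He: (a e) => //; move/forallP: H => /(_ e); rewrite He /= implybF.
    by move/negbTE->.
  rewrite mulr0; move/forallPn: H => [e]; rewrite negb_imply negbK => /andP[eK ae].
  by rewrite (bigD1 e) //= /G ae eK mul0r.
rewrite (eq_bigr _ (fun a _ => E a)) prod_form /G.
rewrite -prodr_const (bigID (fun e => e \in K)) /= [X in _ * X]big1.
  by rewrite mulr1; apply: eq_bigr => e ->; rewrite add0r.
by move=> e /negbTE ->; rewrite addrC subrK.
Qed.

Lemma sum_exists (K : {set 'I_L}) :
  \sum_(a : act L) wa a * ([exists e in K, a e])%:R = 1 - (1 - p) ^+ #|K|.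
Proof.
rewrite -sum_none -[X in _ = X - _]sum_wa -sumrB; apply: eq_bigr => a _.
rewrite -[X in X - _]mulr1 -mulrBr; congr (_ * _).
have -> : [exists e in K, a e] = ~~ [forall e in K, ~~ a e].
  by rewrite negb_forall_in; apply: eq_existsb => e; rewrite negbK.
by case: [forall _ in _, _]; rewrite /= ?subrr ?subr0.
Qed.

Hypothesis p0 : 0 <= p.
Hypothesis p1 : p <= 1.

Lemma q0 : 0 <= 1 - p. Proof. by rewrite subr_ge0. Qed.
Lemma q1 : 1 - p <= 1. Proof. by rewrite lerBlDr lerDl. Qed.

Lemma wa_ge0 a : 0 <= wa a.
Proof. apply: prodr_ge0 => e _; case: (a e) => //; exact: q0. Qed.

Definition pi (u : nat) : R := 1 - (1 - p) ^+ (if u == L then 2 else 1)%N.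

Fixpoint F (t u : nat) : R :=
  if t is t'.+1 then F t' u - pi u * (F t' u - F t' u.-1) else u%:R.

Lemma pi_ge0 u : 0 <= pi u.
Proof. by rewrite /pi subr_ge0 exprn_ile1 // ?q0 ?q1. Qed.
Lemma pi_le1 u : pi u <= 1.
Proof. by rewrite /pi lerBlDr lerDl exprn_ge0 // q0. Qed.

Lemma F_mono t u : F t u.-1 <= F t u.
Proof.
elim: t u => [|t IH] u /=; first by rewrite ler_nat leq_pred.
have h1 := IH u; have h2 := IH u.-1.
have a0 := pi_ge0 u; have a1 := pi_le1 u.
have b0 := pi_ge0 u.-1; have b1 := pi_le1 u.-1.
set x := F t u.-1.-1 in h2 *; set y := F t u.-1 in h1 h2 *; set z := F t u in h1 *.
nra.
Qed.

Lemma pow_mono (k n : nat) : (k <= n)%N -> (1 - p) ^+ n <= (1 - p) ^+ k.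
Proof.
move=> kn; rewrite -(subnK kn) exprD ler_piMl ?exprn_ge0 ?exprn_ile1 ?q0 ?q1 //.
Qed.

Lemma avg_eq t u (K : {set 'I_L}) (U' : act L -> nat) :
  (forall a, U' a = if [exists e in K, a e] then u.-1 else u) ->
  \sum_(a : act L) wa a * F t (U' a) =
    F t u - (1 - (1 - p) ^+ #|K|) * (F t u - F t u.-1).
Proof.
move=> HU; rewrite -sum_exists.
have E : F t u - (\sum_(a : act L) wa a * ([exists e in K, a e])%:R) * (F t u - F t u.-1) = \sum_(a : act L) (wa a * F t u - wa a * ([exists e in K, a e])%:R * (F t u - F t u.-1)).
  by rewrite sumrB -!mulr_suml sum_wa mul1r.
rewrite E.
apply: eq_bigr => a _; rewrite HU.
case: [exists _ in _, _] => /=; rewrite ?mulr1 ?mulr0; ring.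
Qed.

Lemma subr_ge0_rev (x y : R) : y <= x -> 0 <= x - y. Proof. by rewrite subr_ge0. Qed.

Lemma avg_ge t u (K : {set 'I_L}) (U' : act L -> nat) :
  (forall a, U' a = u \/ (U' a = u.-1 /\ [exists e in K, a e])) ->
  F t u - (1 - (1 - p) ^+ #|K|) * (F t u - F t u.-1) <=
  \sum_(a : act L) wa a * F t (U' a).
Proof.
move=> HU; rewrite -sum_exists.
have E : F t u - (\sum_(a : act L) wa a * ([exists e in K, a e])%:R) * (F t u - F t u.-1) = \sum_(a : act L) (wa a * F t u - wa a * ([exists e in K, a e])%:R * (F t u - F t u.-1)).
  by rewrite sumrB -!mulr_suml sum_wa mul1r.
rewrite E.
apply: ler_sum => a _; have w0 := wa_ge0 a; have d0 := F_mono t u.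
case: (HU a) => [->|[-> ->]] /=; last by rewrite mulr1; rewrite le_eqVlt; apply/orP; left; apply/eqP; ring.
have c0 : 0 <= ([exists e in K, a e])%:R :> R by rewrite ler0n.
have := mulr_ge0 (mulr_ge0 w0 c0) (subr_ge0_rev d0).
set c := _%:R. set x := F t u. set y := F t u.-1. set w := wa a.
move=> h; lra.
Qed.
End Prob.

Section Sim.
Variable L : nat.
Implicit Types (tr : seq 'I_L) (v : nat).

Definition Unex tr : nat := #|[pred e : 'I_L | e \notin tr]|.

Lemma Unex_rcons tr e :
  Unex (rcons tr e) = if e \in tr then Unex tr else (Unex tr).-1.
Proof.
rewrite /Unex; case: (boolP (e \in tr)) => H.
  by apply: eq_card => x; rewrite !inE mem_rcons in_cons; case: eqP => // ->; rewrite H.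
rewrite (cardD1 e [pred x | x \notin tr]) inE H /=.
by apply: eq_card => x; rewrite !inE mem_rcons in_cons negb_or.
Qed.

Lemma Unex_nil : Unex [::] = L.
Proof. by rewrite -[RHS](card_ord L); apply: eq_card => x; rewrite !inE in_nil. Qed.

Lemma Unex_le tr e : (Unex (rcons tr e) <= Unex tr)%N.
Proof. by rewrite Unex_rcons; case: (e \in tr) => //; exact: leq_pred. Qed.

Lemma Unex_lt tr e : e \in tr -> (Unex tr < L)%N.
Proof.
move=> H; rewrite -[L](card_ord L); apply: proper_card; apply/properP; split.
  by apply/subsetP.
by exists e; rewrite ?inE ?H.
Qed.

Definition stepf (s : strategy L) (h : seq (act L)) v tr (a : act L) : nat * seq 'I_L :=
  match mv v a (s (rcons h a)) with
  | Some (e, v') => (v', rcons tr e)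
  | None => (v, tr)
  end.

Lemma simst_cons s h v tr a l :
  simst s h v tr (a :: l) = simst s (rcons h a) (stepf s h v tr a).1 (stepf s h v tr a).2 l.
Proof. by rewrite /= /stepf; case: mv => [[e v']|]. Qed.

Lemma simst_rcons s h v tr l a :
  simst s h v tr (rcons l a) =
  stepf s (h ++ l) (simst s h v tr l).1 (simst s h v tr l).2 a.
Proof.
elim: l h v tr => [|b l IH] h v tr.
  by rewrite /= cats0 /stepf; case: mv => [[e v']|].
by rewrite rcons_cons simst_cons IH simst_cons -cats1 -catA.
Qed.

Lemma mv_some v (a : act L) m e v' : mv v a m = Some (e, v') ->
  a e /\ ((v = e /\ v' = (e.+1 %% L)%N) \/ (v = (e.+1 %% L)%N /\ v' = e)).
Proof.
case: m => [f|] //=.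
case: ifP => [/andP[af /eqP->] [<- <-]|_]; first by split => //; left.
by case: ifP => [/andP[af /eqP->] [<- <-]|_] //; split => //; right.
Qed.

Lemma modS (e : 'I_L) : (e.+1 %% L = e.+1 /\ e.+1 < L)%N \/ (e.+1 = L /\ (e.+1 %% L)%N = 0%N).
Proof.
case: (ltnP e.+1 L) => h; first by left; rewrite modn_small.
have E : e.+1 = L by have := ltn_ord e; lia.
by right; rewrite E modnn.
Qed.


Definition Inv v tr : Prop := (v < L)%N /\ exists A B : nat, (A + B <= L)%N /\
  (forall e : 'I_L, (e \in tr) = ((e < A) || (L - B <= e))%N) /\ ((v <= A) || (L - B <= v))%N.

Lemma inv_nil : (0 < L)%N -> Inv 0 [::].
Proof.
move=> h; split=> //; exists 0%N, 0%N; split=> //; split=> // e.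
by rewrite in_nil; have := ltn_ord e; lia.
Qed.

Lemma inv_step v tr : Inv v tr -> exists K : {set 'I_L},
  (#|K| <= (if Unex tr == L then 2 else 1))%N /\
  forall (a : act L) m e v', mv v a m = Some (e, v') ->
    Inv v' (rcons tr e) /\ (e \in tr \/ [exists x in K, a x]).
Proof.
move=> [vL [A [B [hAB [hmem hv]]]]].
have h0L : (0 < L)%N by lia.
have hLm : (L.-1 < L)%N by lia.
pose K := [set x : 'I_L | (x \notin tr) && ((v == x) || (v == (x.+1 %% L)%N))].
exists K; split.
- case Etr: tr hmem => [|e0 tr'] hmem.
  + rewrite Unex_nil eqxx.
    have A0 : A = 0%N.
      case: (posnP A) => // Apos; have := hmem (Ordinal h0L); rewrite in_nil /= Apos.
      done.
    have B0 : B = 0%N.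
      case: (posnP B) => // Bpos; have := hmem (Ordinal hLm); rewrite in_nil /=.
      have -> : (L - B <= L.-1)%N by lia.
      by rewrite orbT.
    have v0 : v = 0%N by lia.
    have sub : K \subset [set Ordinal h0L; Ordinal hLm].
      apply/subsetP => x; rewrite !inE v0 => /andP[_ hx].
      move: (modS x) hx; move: (x.+1 %% L)%N => mx hm hx.
      apply/orP; rewrite -!val_eqE /=; lia.
    apply: (leq_trans (subset_leq_card sub)); rewrite cards2.
    by case: (_ != _).
  + have Hlt := Unex_lt (mem_head e0 tr').
    rewrite (ltn_eqF Hlt).
    case: (set_0Vmem K) => [->|[x xK]]; first by rewrite cards0.
    apply: (leq_trans (subset_leq_card (_ : K \subset [set x]))); last by rewrite cards1.
    apply/subsetP => y yK; rewrite inE; apply/eqP/val_inj.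
    move: xK yK; rewrite !inE Etr !hmem => /andP[hx1 hx2] /andP[hy1 hy2].
    have := hmem e0; rewrite mem_head => he0.
    have := ltn_ord e0; have := ltn_ord x; have := ltn_ord y.
    move: (modS x) hx2; move: (x.+1 %% L)%N => mx hmx hx2.
    move: (modS y) hy2; move: (y.+1 %% L)%N => my hmy hy2.
    move=> *; change (nat_of_ord y = nat_of_ord x); lia.
- move=> a m e v' /mv_some [ae hmv].
  have v'L : (v' < L)%N.
    by case: hmv => [[_ ->]|[_ ->]]; [exact: ltn_pmod | exact: ltn_ord].
  have eL := ltn_ord e.
  case: (boolP (e \in tr)) => etr.
  + split; last by left.
    split => //; exists A, B; split => //; split.
      by move=> x; rewrite mem_rcons in_cons -hmem; case: eqP => // ->; rewrite etr.
    rewrite hmem in etr; move: (modS e) hmv etr hv; move: (e.+1 %% L)%N => me; lia.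
  + split; last first.
      right; apply/existsP; exists e; rewrite ae andbT inE etr /=.
      by case: hmv => [[-> _]|[-> _]]; rewrite eqxx ?orbT.
    split => //.
    rewrite hmem in etr.
    move: (modS e) hmv; move: (e.+1 %% L)%N => me hme hmv.
    case: (eqVneq (nat_of_ord e) A) => eA.
      exists A.+1, B; split; first by lia.
      split; last by lia.
      by move=> x; rewrite mem_rcons in_cons hmem -val_eqE /=; apply/idP/idP; lia.
    exists A, B.+1; split; first by lia.
    split; last by lia.
    by move=> x; rewrite mem_rcons in_cons hmem -val_eqE /=; apply/idP/idP; lia.
Qed.

End Sim.

Section ClaimA.
Variables (R : realFieldType) (L : nat) (p : R) (s : strategy L).
Hypothesis p0 : 0 <= p.
Hypothesis p1 : p <= 1.

Lemma claimA t : forall h v tr, Inv v tr ->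
  F L p t (Unex tr) <= LS p t (fun l => (Unex (simst s h v tr l).2)%:R).
Proof.
elim: t => [|t IH] h v tr Hinv /=; first by [].
have [K [hK hstep]] := inv_step Hinv.
set U := Unex tr.
have d0 := F_mono L p0 p1 t U.
apply: (@le_trans _ _ (F L p t U - (1 - (1 - p) ^+ #|K|) * (F L p t U - F L p t U.-1))).
  rewrite lerD2l lerN2; apply: ler_wpM2r; first by rewrite subr_ge0.
  by rewrite /pi lerD2l lerN2; apply: pow_mono.
apply: le_trans (avg_ge p0 p1 t (U' := fun a => Unex (stepf s h v tr a).2) _) _.
  move=> a; rewrite /stepf; case E: mv => [[e v']|] /=; last by left.
  have [_ He] := hstep _ _ _ _ E; rewrite Unex_rcons.
  by case: He => [->|Hx]; [left | case: (e \in tr); [left|right]].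
apply: ler_sum => a _; apply: ler_wpM2l; first exact: (wa_ge0 p0 p1 a).
rewrite /stepf; case E: mv => [[e v']|] /=; apply: IH => //.
exact: (hstep _ _ _ _ E).1.
Qed.
End ClaimA.

Section Euler.
Variable L : nat.
Hypothesis HL : (2 <= L)%N.

Definition nst v (tr : seq 'I_L) (r : option ('I_L * nat)) : nat * seq 'I_L :=
  match r with Some (e, v') => (v', rcons tr e) | None => (v, tr) end.

Definition EInv v (tr : seq 'I_L) : Prop :=
  Unex tr = 0%N \/ (tr = [::] /\ v = 0%N) \/
  exists e1 rest k, tr = e1 :: rest /\ (0 < k < L)%N /\ size tr = k /\ Unex tr = (L - k)%N /\
   ((nat_of_ord e1 = 0%N /\ v = k /\ forall x : 'I_L, (x \in tr) = (x < k)%N) \/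
    (nat_of_ord e1 = L.-1 /\ v = (L - k)%N /\ forall x : 'I_L, (x \in tr) = (L - k <= x)%N)).

Lemma active_ord (a : act L) (x : 'I_L) : active a x = a x.
Proof.
apply/existsP/idP => [[y /andP[/eqP yx ay]]|ax]; last by exists x; rewrite eqxx.
by have -> : x = y by apply: val_inj.
Qed.

Lemma eul_step v tr : EInv v tr -> exists K : {set 'I_L},
  #|K| = (if Unex tr == L then 2 else 1)%N /\
  forall (a : act L) m, eul_ok v tr a (mv v a m) ->
    EInv (nst v tr (mv v a m)).1 (nst v tr (mv v a m)).2 /\
    Unex (nst v tr (mv v a m)).2 = if [exists x in K, a x] then (Unex tr).-1 else Unex tr.
Proof.
have h0L : (0 < L)%N by lia.
have hLm : (L.-1 < L)%N by lia.
move=> HE0; case: (HE0) => [U0|[[-> ->]|[e1 [rest [k [Etr [hk [hs [hU hdir]]]]]]]]].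
- exists [set Ordinal h0L]; rewrite cards1 U0 (_ : (0 == L) = false); last by lia.
  split => // a m _.
  case: mv => [[e v']|] /=; last by rewrite U0; split; [left | case: ifP].
  have hz : Unex (rcons tr e) = 0%N.
    by have := Unex_le tr e; rewrite U0 leqn0 => /eqP.
  by rewrite hz; split; [left | case: ifP].
- exists [set Ordinal h0L; Ordinal hLm]; rewrite cards2 Unex_nil eqxx.
  split; first by rewrite -val_eqE /=; case: eqP => //; lia.
  move=> a m; case E: (mv 0 a m) => [[e v']|] /=.
  + move=> _; have [ae hmv] := mv_some E.
    have eK : e \in [set Ordinal h0L; Ordinal hLm].
      rewrite !inE -!val_eqE /=; move: (modS e) hmv; move: (e.+1 %% L)%N => me; lia.
    have -> : [exists x in [set Ordinal h0L; Ordinal hLm], a x].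
      by apply/existsP; exists e; rewrite eK ae.
    have hU1 : Unex [:: e] = L.-1 by rewrite (Unex_rcons [::] e) in_nil Unex_nil.
    rewrite hU1; split => //.
    right; right; exists e, [::], 1%N; rewrite /=; split => //; split; first by lia. split => //.
    split; first by rewrite hU1; lia.
    have eL := ltn_ord e.
    move: (modS e) hmv; move: (e.+1 %% L)%N => me hme hmv.
    case: (posnP e) => e0.
      left; split => //; split; first by lia.
      by move=> x; rewrite in_cons in_nil orbF -val_eqE /=; apply/idP/idP; lia.
    right; split; first by lia.
    split; first by lia.
    by move=> x; rewrite in_cons in_nil orbF -val_eqE /=; apply/idP/idP; have := ltn_ord x; lia.
  + rewrite /= => /andP[n0 nL].
    have -> : [exists x in [set Ordinal h0L; Ordinal hLm], a x] = false.
      apply/negbTE/existsP => [[x /andP[]]]; rewrite !inE => /orP[] /eqP -> ax.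
        by move: n0; rewrite -[0%N]/(nat_of_ord (Ordinal h0L)) active_ord ax.
      by move: nL; rewrite -[L.-1]/(nat_of_ord (Ordinal hLm)) active_ord ax.
    split; [by right; left | exact: Unex_nil].
- subst tr.
  have Uk : (Unex (e1 :: rest) == L) = false by rewrite hU; lia.
  rewrite Uk.
  move: hs => /= hs.
  have hkL : (k < L)%N by lia.
  case: hdir => [[he1 [hv hmem]] | [he1 [hv hmem]]]; subst v.
  + exists [set Ordinal hkL]; rewrite cards1; split => // a m.
    rewrite /eul_ok /= hs hkL he1 eqxx /=.
    case E: (mv k a m) => [[e v']|] /=.
    * move=> /eqP ek; have [ae hmv] := mv_some E.
      have eK : e = Ordinal hkL by apply: val_inj.
      have etr : e \notin e1 :: rest by rewrite hmem ek ltnn.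
      have -> : [exists x in [set Ordinal hkL], a x].
        by apply/existsP; exists e; rewrite inE -eK eqxx ae.
      have hU' : Unex (rcons (e1 :: rest) e) = (L - k).-1.
        by rewrite Unex_rcons (negbTE etr) hU.
      rewrite hU' hU; split => //.
      have v'E : v' = (k.+1 %% L)%N.
        move: (modS e) hmv; rewrite ek; move: (k.+1 %% L)%N => me; lia.
      case: (ltnP k.+1 L) => hk1; last by left; rewrite hU'; lia.
      right; right; exists e1, (rcons rest e), k.+1.
      split => //; split; first by lia.
      split; first by rewrite /= size_rcons hs.
      split; first by rewrite hU'; lia.
      left; split => //; split; first by rewrite v'E modn_small.
      move=> x; rewrite -rcons_cons mem_rcons in_cons hmem -val_eqE /= ek.
      by apply/idP/idP; lia.
    * move=> na.
      have -> : [exists x in [set Ordinal hkL], a x] = false.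
        apply/negbTE/existsP => [[x /andP[]]]; rewrite inE => /eqP -> ax.
        by move: na; rewrite -[k in active a k]/(nat_of_ord (Ordinal hkL)) active_ord ax.
      by split.
  + have hb : (L - k.+1 < L)%N by lia.
    have Hnxt : ((L - k + L.-1) %% L)%N = (L - k.+1)%N.
      rewrite (_ : (L - k + L.-1 = L - k.+1 + L)%N); last by lia.
      by rewrite modnDr modn_small.
    exists [set Ordinal hb]; rewrite cards1; split => // a m.
    rewrite /eul_ok /= hs hkL he1 (_ : (L.-1 == 0%N) = false); last by lia.
    rewrite Hnxt /=.
    case E: (mv (L - k) a m) => [[e v']|] /=.
    * move=> /eqP ek; have [ae hmv] := mv_some E.
      have eK : e = Ordinal hb by apply: val_inj.
      have etr : e \notin e1 :: rest by rewrite hmem ek; lia.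
      have -> : [exists x in [set Ordinal hb], a x].
        by apply/existsP; exists e; rewrite inE -eK eqxx ae.
      have hU' : Unex (rcons (e1 :: rest) e) = (L - k).-1.
        by rewrite Unex_rcons (negbTE etr) hU.
      rewrite hU' hU; split => //.
      have v'E : v' = (L - k.+1)%N.
        move: (modS e) hmv; rewrite ek; move: ((L - k.+1).+1 %% L)%N => me; lia.
      case: (ltnP k.+1 L) => hk1; last by left; rewrite hU'; lia.
      right; right; exists e1, (rcons rest e), k.+1.
      split => //; split; first by lia.
      split; first by rewrite /= size_rcons hs.
      split; first by rewrite hU'; lia.
      right; split => //; split => //.
      move=> x; rewrite -rcons_cons mem_rcons in_cons hmem -val_eqE /= ek.
      by apply/idP/idP; lia.
    * move=> na.
      have -> : [exists x in [set Ordinal hb], a x] = false.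
        apply/negbTE/existsP => [[x /andP[]]]; rewrite inE => /eqP -> ax.
        by move: na; rewrite (_ : (L - k.+1)%N = nat_of_ord (Ordinal hb)) // active_ord ax.
      by split.
Qed.

End Euler.

Lemma state_rcons L (s : strategy L) w a :
  state s (rcons w a) = stepf s w (state s w).1 (state s w).2 a.
Proof. by rewrite /state simst_rcons. Qed.

Lemma einv_all L (HL : (2 <= L)%N) (sE : strategy L) : Eulerian sE ->
  forall w, EInv (state sE w).1 (state sE w).2.
Proof.
move=> HE; elim/last_ind => [|w a IH]; first by right; left.
have [K [_ H]] := eul_step HL IH.
have [H1 _] := H a (sE (rcons w a)) (HE w a).
by rewrite state_rcons.
Qed.

Section ClaimB.
Variables (R : realFieldType) (L : nat) (p : R) (sE : strategy L).
Hypothesis HL : (2 <= L)%N.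
Hypothesis HE : Eulerian sE.

Lemma claimB t : forall w,
  LS p t (fun l => (Unex (state sE (w ++ l)).2)%:R) = F L p t (Unex (state sE w).2).
Proof.
elim: t => [|t IH] w; first by rewrite /= cats0.
rewrite [LHS]/=.
transitivity (\sum_(a : act L) wa p a * F L p t (Unex (state sE (rcons w a)).2)).
  apply: eq_bigr => a _; congr (_ * _); rewrite -IH; apply: LS_ext => l.
  by rewrite cat_rcons.
have [K [hK H]] := eul_step HL (einv_all HL HE w).
rewrite (avg_eq p t (u := Unex (state sE w).2) (K := K)) /=.
  by rewrite /pi hK.
move=> a; have [_ H2] := H a (sE (rcons w a)) (HE w a).
by rewrite state_rcons.
Qed.
End ClaimB.

Lemma unif_eq (R : realFieldType) (L : nat) (p : R) (s : strategy L) t :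
  unif_term p s t = L%:R^-1 * LS p t (fun l => (Unex (state s l).2)%:R).
Proof.
rewrite /unif_term; congr (_ * _).
rewrite /prob_not_found exchange_big /= -sum_ffun_LS; apply: eq_bigr => w _.
rewrite (eq_bigr (fun e => if e \notin (state s (hist_of w)).2 then weight p w else 0)); last first.
  by move=> e _; case: (e \in _).
by rewrite -big_mkcond sumr_const mulr_natr.
Qed.

Theorem mainTheorem16 (R : archiRealFieldType) (L : nat) (p : R) :
  (2 <= L)%N -> 0 < p <= 1 ->
  forall sE : strategy L, Eulerian sE ->
  forall s : strategy L, payoff_le p sE s.
Proof.
move=> HL /andP[pp p1] sE HE s N; exists N.
have p0 := ltW pp.
apply: ler_sum => t _; rewrite !unif_eq.
apply: ler_wpM2l; first by rewrite invr_ge0 ler0n.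
have -> : LS p t (fun l => (Unex (state sE l).2)%:R) = F L p t L.
  by have := claimB p HL HE t [::]; rewrite Unex_nil.
have := claimA s p0 p1 t [::] (inv_nil (ltnW HL)).
by rewrite Unex_nil.
Qed.
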